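(* Let $(L,\nu,\tau)$ be a Šerstnev random normed space whose triangle function $\tau$ is sup-continuous and satisfies $$\tau(F,G)(x)\ \ge\ \sup_{t\in[0,1]}\min\{F(tx),G((1-t)x)\}\qquad\text{for all }x\ge0,\ F,G\in D^+ .$$ Then the family $P_{fc}(L)$ of all nonempty closed convex subsets of $L$ is closed in $P_f(L)$ with respect to the probabilistic Pompeiu–Hausdorff metric $H$; hence $P_{fc}(L)$ is complete with respect to $H$ if $L$ is complete. Moreover, if $L$ is complete, the family $P_{kc}(L)$ of all nonempty compact convex subsets of $L$ is complete with respect to $H$.
   Context: $\Delta^+$ is the set of functions $F:[-\infty,\infty]\to[0,1]$ that are nondecreasing, left-continuous on $\mathbb R$, with $F(-\infty)=0$, $F(\infty)=1$, $F(0)=0$; ordered pointwise; $D^+=\{F\in\Delta^+:\lim_{x\to\infty}F(x)=1\}$; $\epsilon_0(x)=0$ for $x\le0$, $=1$ for $x>0$. Infimum of $\{F_i\}$ in $\Delta^+$: $G(x)=\sup_{x'<x}\inf_iF_i(x')$; supremum pointwise. A triangle function is $\tau:\Delta^+\times\Delta^+\to\Delta^+$ commutative, associative, nondecreasing in each argument, with $\tau(F,\epsilon_0)=F$, continuous for weak convergence. A Šerstnev random normed space $(L,\nu,\tau)$: $L$ a real vector space, $\tau$ a continuous triangle function with $\tau(D^+\times D^+)\subset D^+$, $\nu:L\to D^+$ with $\nu(p)=\epsilon_0\iff p=0$; $\nu(ap)(x)=\nu(p)(x/|a|)$ for $x\ge0$, $a\ne0$; $\nu(p+q)\ge\tau(\nu(p),\nu(q))$.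 It is a probabilistic metric space with $F_{pq}=\nu(p-q)$, topologized by the strong topology with neighborhood base $U_t(p)=\{q:F_{pq}(t)>1-t\}$, $t>0$; completeness and compactness refer to it. $\tau$ is sup-continuous if $\tau(\sup_iF_i,G)=\sup_i\tau(F_i,G)$ for every family $\{F_i\}\subset\Delta^+$, $G\in\Delta^+$. For nonempty $A,B\subset L$: $F_{pB}(x)=\sup_{q\in B}F_{pq}(x)$, $\Gamma^*_{AB}(x)=\inf_{p\in A}F_{pB}(x)$, $F^*_{AB}(x)=\sup_{x'<x}\Gamma^*_{AB}(x')$, $H(A,B)=F_{AB}=\min\{F^*_{AB},F^*_{BA}\}$. $P_f(L)$ is the family of nonempty closed subsets; $A_n\to A$ with respect to $H$ iff for every $t>0$, $F_{A_nA}(t)>1-t$ for all large $n$, and Cauchy sequences/completeness for $H$ are defined analogously; a subfamily is closed in $P_f(L)$ if it contains the $H$-limits in $P_f(L)$ of its convergent sequences. *)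

(* Defs.v *)
From HB Require Import structures.
From mathcomp Require Import all_boot all_order all_algebra.
From mathcomp Require Import all_classical all_reals all_analysis.
Set Implicit Arguments. Unset Strict Implicit. Unset Printing Implicit Defensive.
Import Order.TTheory GRing.Theory Num.Theory numFieldNormedType.Exports.
Local Open Scope classical_set_scope.
Local Open Scope ring_scope.

(* A distance distribution function F : [-oo,oo] -> [0,1] is represented by its
   restriction to the real line; the values F(-oo)=0 and F(+oo)=1 are fixed by
   convention and carry no information. *)
Section Defs.
Variable R : realType.
Notation dfun := (R -> R).

Definition Deltap (F : dfun) : Prop :=
  [/\ (forall x, 0 <= F x <= 1),
      (forall x y, x <= y -> F x <= F y),
      (forall x, F y @[y --> x^'-] --> F x) &
      F 0 = 0].

Definition Dplus (F : dfun) : Prop := Deltap F /\ F x @[x --> +oo] --> (1 : R).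

Definition eps0 : dfun := fun x => if 0 < x then 1 else 0.

Definition dle (F G : dfun) : Prop := forall x, F x <= G x.

Definition weak_cvg (Fn : nat -> dfun) (F : dfun) : Prop :=
  forall x, {for x, continuous F} -> Fn n x @[n --> \oo] --> F x.

Definition triangle_function (tau : dfun -> dfun -> dfun) : Prop :=
  [/\ (forall F G, Deltap F -> Deltap G -> Deltap (tau F G)),
      (forall F G, Deltap F -> Deltap G -> forall x, tau F G x = tau G F x),
      (forall F G K, Deltap F -> Deltap G -> Deltap K ->
          forall x, tau F (tau G K) x = tau (tau F G) K x),
      (forall F G K, Deltap F -> Deltap G -> Deltap K -> dle F G ->
          dle (tau F K) (tau G K) /\ dle (tau K F) (tau K G)) &
      (forall F, Deltap F -> forall x, tau F eps0 x = F x)].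

Definition tau_continuous (tau : dfun -> dfun -> dfun) : Prop :=
  forall (Fn Gn : nat -> dfun) (F G : dfun),
    (forall n, Deltap (Fn n)) -> (forall n, Deltap (Gn n)) -> Deltap F -> Deltap G ->
    weak_cvg Fn F -> weak_cvg Gn G ->
    weak_cvg (fun n => tau (Fn n) (Gn n)) (tau F G).

(* supremum in Delta^+ is pointwise *)
Definition sup_continuous (tau : dfun -> dfun -> dfun) : Prop :=
  forall (I : Type) (F : I -> dfun) (G : dfun),
    (forall i, Deltap (F i)) -> Deltap G ->
    forall x, tau (fun y => sup [set F i y | i in [set: I]]) G x
              = sup [set tau (F i) G x | i in [set: I]].

Variable L : lmodType R.

Definition serstnev_RNS (nu : L -> dfun) (tau : dfun -> dfun -> dfun) : Prop :=
  [/\ triangle_function tau, tau_continuous tau,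
      (forall F G, Dplus F -> Dplus G -> Dplus (tau F G)) &
   [/\ (forall p, Dplus (nu p)),
      (forall p, (forall x, nu p x = eps0 x) <-> p = 0),
      (forall (a : R) p x, a != 0 -> 0 <= x -> nu (a *: p) x = nu p (x / `|a|)) &
      (forall p q, dle (tau (nu p) (nu q)) (nu (p + q)))]].

Variable nu : L -> dfun.

Definition Fpq (p q : L) : dfun := nu (p - q).

Definition Unbh (t : R) (p : L) : set L := [set q | 1 - t < Fpq p q t].

Definition s_open (O : set L) : Prop :=
  forall p, O p -> exists2 t, 0 < t & Unbh t p `<=` O.

Definition s_closed (A : set L) : Prop :=
  forall p, (forall t, 0 < t -> exists2 q, A q & Unbh t p q) -> A p.

Definition s_compact (K : set L) : Prop :=
  forall (I : Type) (O : I -> set L), (forall i, s_open (O i)) ->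
    (forall p, K p -> exists i, O i p) ->
    exists (n : nat) (f : 'I_n -> I), forall p, K p -> exists k, O (f k) p.

Definition s_cvg (u : nat -> L) (p : L) : Prop :=
  forall t, 0 < t -> exists N, forall n, (N <= n)%N -> Unbh t p (u n).

Definition s_cauchy (u : nat -> L) : Prop :=
  forall t, 0 < t -> exists N, forall m n, (N <= m)%N -> (N <= n)%N ->
    1 - t < Fpq (u m) (u n) t.

Definition s_complete : Prop :=
  forall u, s_cauchy u -> exists p, s_cvg u p.

Definition convex (A : set L) : Prop :=
  forall p q (l : R), A p -> A q -> 0 <= l <= 1 -> A (l *: p + (1 - l) *: q).

Definition FpB (p : L) (B : set L) : dfun :=
  fun x => sup [set Fpq p q x | q in B].
Definition GammaStar (A B : set L) : dfun :=
  fun x => inf [set FpB p B x | p in A].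
Definition FStar (A B : set L) : dfun :=
  fun x => sup [set GammaStar A B x' | x' in [set x' | x' < x]].
Definition H (A B : set L) : dfun :=
  fun x => Num.min (FStar A B x) (FStar B A x).

Definition Pf (A : set L) : Prop := A !=set0 /\ s_closed A.
Definition Pfc (A : set L) : Prop := Pf A /\ convex A.
Definition Pkc (A : set L) : Prop := [/\ A !=set0, s_compact A & convex A].

Definition H_cvg (An : nat -> set L) (A : set L) : Prop :=
  forall t, 0 < t -> exists N, forall n, (N <= n)%N -> 1 - t < H (An n) A t.

Definition H_cauchy (An : nat -> set L) : Prop :=
  forall t, 0 < t -> exists N, forall m n, (N <= m)%N -> (N <= n)%N ->
    1 - t < H (An m) (An n) t.

Definition H_closed_in_Pf (fam : set L -> Prop) : Prop :=
  forall An A, (forall n, fam (An n)) -> Pf A -> H_cvg An A -> fam A.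

Definition H_complete (fam : set L -> Prop) : Prop :=
  forall An, (forall n, fam (An n)) -> H_cauchy An -> exists2 A, fam A & H_cvg An A.

End Defs.

(* Main.v *)
Require Import Defs.
From HB Require Import structures.
From mathcomp Require Import all_boot all_order all_algebra.
From mathcomp Require Import all_classical all_reals all_analysis.
Import Order.TTheory GRing.Theory Num.Theory.
Local Open Scope classical_set_scope.
Local Open Scope ring_scope.
From mathcomp Require Import lra.
Section E.
Variable R : realType.
Definition e (k : nat) : R := (2 ^+ k)^-1.
Lemma e_gt0 k : 0 < e k. Proof. by rewrite /e invr_gt0 exprn_gt0. Qed.
Lemma eS k : e k.+1 = e k / 2. Proof. by rewrite /e exprS invfM mulrC. Qed.
Lemma e_le k j : (k <= j)%N -> e j <= e k.
Proof.
elim: j => [|j IH]; first by rewrite leqn0 => /eqP ->.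
rewrite leq_eqVlt => /orP[/eqP->//|]; rewrite ltnS => /IH h.
rewrite eS; have := e_gt0 j; lra.
Qed.
Lemma e_small t : 0 < t -> exists k, e k < t.
Proof.
move=> t0; exists (Num.Def.archi_bound t^-1).
have h := upper_nthrootP (leqnn (Num.Def.archi_bound t^-1)).
rewrite /e -[X in _ < X](invrK t) ltf_pV2 ?posrE ?exprn_gt0 ?invr_gt0 //.
Qed.
End E.
Arguments e {R}.
Arguments e_gt0 {R}.
Arguments eS {R}.
Arguments e_le {R k j}.
Arguments e_small {R t}.
Section Aux.
Variables (R : realType) (L : lmodType R) (nu : L -> R -> R)
  (tau : (R -> R) -> (R -> R) -> (R -> R)).
Hypothesis HS : serstnev_RNS nu tau.
Hypothesis Htr : forall (F G : R -> R) (x : R), Dplus F -> Dplus G -> 0 <= x ->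
     sup [set Num.min (F (t * x)) (G ((1 - t) * x)) | t in [set t : R | 0 <= t <= 1]]
       <= tau F G x.

Lemma nu_D p : Dplus (nu p). Proof. by case: HS => _ _ _ []. Qed.
Lemma nu01 p x : 0 <= nu p x <= 1.
Proof. by case: (nu_D p) => -[]. Qed.
Lemma nu_mono p x y : x <= y -> nu p x <= nu p y.
Proof. by case: (nu_D p) => -[_ + _ _ _]; apply. Qed.
Lemma nu0 x : 0 < x -> nu 0 x = 1.
Proof.
case: HS => _ _ _ [_ H0 _ _] x0.
by have /(_ x) -> := (proj2 (H0 0) erefl); rewrite /eps0 x0.
Qed.
Lemma nu_scale a p x : a != 0 -> 0 <= x -> nu (a *: p) x = nu p (x / `|a|).
Proof. by case: HS => _ _ _ [_ _ + _]; apply. Qed.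

Lemma nu_add p q x y : 0 <= x -> 0 <= y -> 0 < x + y ->
  Num.min (nu p x) (nu q y) <= nu (p + q) (x + y).
Proof.
move=> x0 y0 xy0.
case: HS => _ _ _ [_ _ _ Ht].
apply: (le_trans _ (Ht p q (x + y))).
apply: (le_trans _ (Htr _ _ _ (nu_D p) (nu_D q) (ltW xy0))).
have ne : x + y != 0 by rewrite gt_eqF.
apply: ub_le_sup.
  exists 1 => _ [t _ <-]; rewrite ge_min; apply/orP; left; by case/andP: (nu01 p (t * (x + y))).
exists (x / (x + y)).
  apply/andP; split; first by rewrite divr_ge0 // ltW.
  by rewrite ler_pdivrMr // mul1r lerDl.
rewrite divfK // mulrBl mul1r divfK //.
by rewrite addrC addKr.
Qed.

Definition cl s p q := 1 - s < nu (p - q) s.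
Lemma clE s p q : Unbh nu s p q = cl s p q. Proof. by []. Qed.

Lemma cl_tri s s' p q r : 0 < s -> 0 < s' -> cl s p q -> cl s' q r -> cl (s + s') p r.
Proof.
rewrite /cl => s0 s'0 h1 h2.
have -> : p - r = (p - q) + (q - r) by rewrite addrA subrK.
apply: (lt_le_trans _ (nu_add _ _ _ _ (ltW s0) (ltW s'0) (addr_gt0 s0 s'0))).
rewrite lt_min; apply/andP; split.
  apply: le_lt_trans h1; apply: lerB => //; rewrite lerDl; exact: ltW.
apply: le_lt_trans h2; apply: lerB => //; rewrite lerDr; exact: ltW.
Qed.

Lemma nu_sym p q s : 0 <= s -> nu (p - q) s = nu (q - p) s.
Proof.
move=> s0.
have -> : p - q = (-1) *: (q - p) by rewrite scaleN1r opprB.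
by rewrite nu_scale ?oppr_eq0 ?oner_eq0 // normrN normr1 divr1.
Qed.

Lemma cl_sym s p q : 0 <= s -> cl s p q -> cl s q p.
Proof. by rewrite /cl => s0; rewrite nu_sym. Qed.

Lemma cl_mono s s' p q : s <= s' -> cl s p q -> cl s' p q.
Proof.
rewrite /cl => ss h; apply: (le_lt_trans _ (lt_le_trans h (nu_mono _ _ _ ss))).
by apply: lerB.
Qed.

Lemma cl_refl s p : 0 < s -> cl s p p.
Proof. by move=> s0; rewrite /cl subrr nu0 // ltrBlDr ltrDl. Qed.

Lemma cl_conv s l p p' q q' : 0 < s -> 0 <= l <= 1 -> cl s p p' -> cl s q q' ->
  cl s (l *: p + (1 - l) *: q) (l *: p' + (1 - l) *: q').
Proof.
move=> s0 /andP[l0 l1] hp hq.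
have [->|ln0] := eqVneq l 0.
  by rewrite !scale0r !add0r subr0 !scale1r.
have [->|ln1] := eqVneq l 1.
  by rewrite !scale1r subrr !scale0r !addr0.
have lp : 0 < l by rewrite lt_neqAle eq_sym ln0.
have lp' : 0 < 1 - l by rewrite subr_gt0 lt_neqAle ln1.
rewrite /cl.
have -> : l *: p + (1 - l) *: q - (l *: p' + (1 - l) *: q') =
   l *: (p - p') + (1 - l) *: (q - q').
  by rewrite !scalerBr opprD !addrA; congr (_ + _); rewrite addrAC.
have e : s = l * s + (1 - l) * s by rewrite -mulrDl addrC subrK mul1r.
rewrite [X in nu _ X]e.
apply: (lt_le_trans _ (nu_add _ _ _ _ _ _ _)).
- rewrite !nu_scale ?gt_eqF // ?mulr_ge0 ?ltW //.
  rewrite !gtr0_norm // ![_ * s]mulrC !mulfK ?gt_eqF //.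
  by rewrite lt_min; apply/andP; split; [exact: hp|exact: hq].
- by rewrite mulr_ge0 ?ltW.
- by rewrite mulr_ge0 ?ltW.
- by rewrite -e.
Qed.


Lemma sup01 (S : set R) : (forall y, S y -> 0 <= y <= 1) -> 0 <= sup S <= 1.
Proof.
move=> h.
have ub : has_ubound S by exists 1 => y /h /andP[].
have [[y Sy]|S0] := pselect (S !=set0).
  apply/andP; split.
    by apply: (le_trans _ (ub_le_sup ub Sy)); case/andP: (h y Sy).
  by apply: ge_sup; [exists y|move=> z /h /andP[]].
rewrite (_ : S = set0) ?sup0 ?lexx ?ler01 //.
by apply/seteqP; split => x // Sx; apply: S0; exists x.
Qed.

Lemma inf01 (S : set R) : (forall y, S y -> 0 <= y <= 1) -> 0 <= inf S <= 1.
Proof.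
move=> h.
have lb : has_lbound S by exists 0 => y /h /andP[].
have [[y Sy]|S0] := pselect (S !=set0).
  apply/andP; split.
    by apply: lb_le_inf; [exists y|move=> z /h /andP[]].
  by apply: (le_trans (ge_inf lb Sy)); case/andP: (h y Sy).
rewrite (_ : S = set0) ?inf0 ?lexx ?ler01 //.
by apply/seteqP; split => x // Sx; apply: S0; exists x.
Qed.

Lemma FpB01 p B x : 0 <= FpB nu p B x <= 1.
Proof. by apply: sup01 => _ [q _ <-]; apply: nu01. Qed.

Lemma Gam01 A B x : 0 <= GammaStar nu A B x <= 1.
Proof. by apply: inf01 => _ [q _ <-]; apply: FpB01. Qed.

Lemma Hget A B t p : B !=set0 -> 1 - t < FStar nu A B t -> A p ->
  exists2 q, B q & cl t p q.
Proof.
move=> Bn h Ap; rewrite /FStar in h.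
have ne : [set GammaStar nu A B x' | x' in [set x' | x' < t]] !=set0.
  by exists (GammaStar nu A B (t - 1)), (t - 1) => //=; lra.
have [_ [x' xt <-] h1] := sup_gt ne h.
have h2 : 1 - t < FpB nu p B x'.
  apply: (lt_le_trans h1); apply: ge_inf; last by exists p.
  by exists 0 => _ [r _ <-]; case/andP: (FpB01 r B x').
have neB : [set Fpq nu p q x' | q in B] !=set0.
  by case: Bn => q Bq; exists (Fpq nu p q x'), q.
have [_ [q Bq <-] h3] := sup_gt neB h2.
exists q => //; rewrite /cl; apply: (lt_le_trans h3); apply: nu_mono; exact: ltW.
Qed.

Lemma Hput A B t : 0 < t -> A !=set0 ->
  (forall p, A p -> exists2 q, B q & cl (t / 2) p q) -> 1 - t < FStar nu A B t.
Proof.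
move=> t0 [p0 Ap0] h.
have h1 : 1 - t / 2 <= GammaStar nu A B (t / 2).
  apply: lb_le_inf; first by exists (FpB nu p0 B (t / 2)), p0.
  move=> _ [p Ap <-]; have [q Bq hq] := h p Ap.
  apply: (le_trans (ltW hq)); apply: ub_le_sup; last by exists q.
  by exists 1 => _ [r _ <-]; case/andP: (nu01 (p - r) (t / 2)).
have h2 : GammaStar nu A B (t / 2) <= FStar nu A B t.
  apply: ub_le_sup; last by exists (t / 2) => //=; lra.
  by exists 1 => _ [r _ <-]; case/andP: (Gam01 A B r).
have : 1 - t < 1 - t / 2 by lra.
move=> h3; exact: (lt_le_trans h3 (le_trans h1 h2)).
Qed.

Lemma HE A B t : (1 - t < H nu A B t) <-> (1 - t < FStar nu A B t /\ 1 - t < FStar nu B A t).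
Proof. by rewrite /H lt_min; split => [/andP[]|[-> ->]]. Qed.


Arguments nu_mono {p x y}.
Arguments cl_tri {s s' p q r}.
Arguments cl_sym {s p q}.
Arguments cl_mono {s s' p q}.
Arguments cl_refl {s} p.
Arguments cl_conv {s l p p' q q'}.
Arguments Hget {A B t p}.
Arguments Hput {A B t}.
Arguments HE {A B t}.

Lemma cl_tri2 t p q r : 0 < t -> cl (t / 2) p q -> cl (t / 2) q r -> cl t p r.
Proof.
move=> t0 h1 h2; have t2 : 0 < t / 2 by lra.
by apply: (cl_mono _ (cl_tri t2 t2 h1 h2)); lra.
Qed.

Lemma part1 : H_closed_in_Pf nu (Pfc nu).
Proof.
move=> An A hAn [A0 Acl] hcv; split; first by [].
move=> p q l Ap Aq l01; apply: Acl => t t0.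
have t2 : 0 < t / 2 by lra.
have [N hN] := hcv (t / 2) t2.
have /HE [h1 h2] := hN N (leqnn N).
case: (hAn N) => [[AN0 _] ANc].
have [pn ANp hp] := Hget AN0 h2 Ap.
have [qn ANq hq] := Hget AN0 h2 Aq.
have ANr := ANc _ _ _ ANp ANq l01.
have hr := cl_conv t2 l01 hp hq.
have [a Aa ha] := Hget A0 h1 ANr.
by exists a => //; rewrite clE; apply: cl_tri2 hr ha.
Qed.

Ltac lraf := intros; match goal with
 | |- is_true (?a <= ?b) => let h := fresh in (have h : a <= b by lra); exact h
 | |- is_true (?a < ?b) => let h := fresh in (have h : a < b by lra); exact h
 | |- _ => lra
 end.

Lemma cl_sym' s p q : 0 < s -> cl s p q -> cl s q p.
Proof. by move=> s0; apply: cl_sym; apply: ltW. Qed.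
Arguments cl_sym' {s p q}.
Arguments cl_tri2 {t p q r}.

Lemma limit_exists (An : nat -> set L) : s_complete nu ->
  (forall n, An n !=set0) -> (forall n, convex (An n)) -> H_cauchy nu An ->
  exists A, [/\ A !=set0, s_closed nu A, convex A & H_cvg nu An A].
Proof.
move=> hc An0 Anc hcau.
have : forall k, exists N0, forall m n, (N0 <= m)%N -> (N0 <= n)%N ->
    1 - e k < H nu (An m) (An n) (e k).
  by move=> k; exact: hcau (e k) (e_gt0 k).
case/choice => N hN.
pose M := fix M (k : nat) : nat := if k is k'.+1 then maxn (M k') (N k) else N 0.
have NM k : (N k <= M k)%N by case: k => [|k] //=; exact: leq_maxr.
have MS k : (M k <= M k.+1)%N by rewrite /= leq_maxl.
have Mmono k j : (k <= j)%N -> (M k <= M j)%N.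
  elim: j => [|j IH]; first by rewrite leqn0 => /eqP ->.
  rewrite leq_eqVlt => /orP[/eqP->//|]; rewrite ltnS => /IH h.
  exact: leq_trans h (MS j).
have step j m n : (M j <= m)%N -> (M j <= n)%N -> forall p, An m p ->
    exists2 q, An n q & cl (e j) p q.
  move=> hm hn p hp.
  have /HE [h1 _] := hN j m n (leq_trans (NM j) hm) (leq_trans (NM j) hn).
  exact: Hget (An0 n) h1 hp.
pose A := [set p | forall t, 0 < t -> exists N0, forall n, (N0 <= n)%N ->
  exists2 a, An n a & cl t p a].
have chain k a : An (M k) a -> exists2 p, A p & cl (3 * e k) a p.
  move=> Aa.
  have : forall ja : nat * L, exists q, An (M ja.1) ja.2 ->
      An (M ja.1.+1) q /\ cl (e ja.1) ja.2 q.
    case=> j b /=; have [hb|hb] := pselect (An (M j) b).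
      by have [q ? ?] := step j (M j) (M j.+1) (leqnn _) (MS j) b hb; exists q.
    by exists b.
  case/choice => g hg.
  pose c := fix c (i : nat) : L := if i is i'.+1 then g ((k + i')%N, c i') else a.
  have cin i : An (M (k + i)%N) (c i).
    elim: i => [|i IH]; first by rewrite addn0.
    by rewrite addnS; have [] := hg ((k + i)%N, c i) IH.
  have cstep i : cl (e (k + i)%N) (c i) (c i.+1).
    by have [] := hg ((k + i)%N, c i) (cin i).
  have cest m i : cl (2 * e (k + i)%N - e (k + i + m)%N) (c i) (c (i + m.+1)%N).
    elim: m i => [|m IH] i.
      rewrite addn0 addn1; apply: (cl_mono _ (cstep i)); lraf.
    have hpos : 0 < 2 * e (k + i.+1)%N - e (k + i.+1 + m)%N :> R.
      have := @e_le R _ _ (leq_addr m (k + i.+1)%N); have := @e_gt0 R (k + i.+1)%N; lraf.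
    have h := cl_tri (e_gt0 _) hpos (cstep i) (IH i.+1).
    rewrite -[(i + m.+2)%N]addSnnS; apply: (cl_mono _ h).
    rewrite !addnS addSn (eS (k + i)%N); lraf.
  have ccl i j : (i <= j)%N -> cl (2 * e (k + i)%N) (c i) (c j).
    move=> ij; rewrite -(subnKC ij).
    case: (j - i)%N => [|m].
      rewrite addn0; apply: cl_refl; have := @e_gt0 R (k + i)%N; lraf.
    apply: (cl_mono _ (cest m i)); have := @e_gt0 R (k + i + m)%N; lraf.
  have cc : s_cauchy nu c.
    move=> t t0.
    have [k2 hk2] : exists k2, e k2 < t / 4 by apply: e_small; lraf.
    exists k2 => m n hm hn.
    have P1 : 0 < 2 * e (k + k2)%N :> R by have := @e_gt0 R (k + k2)%N; lraf.
    have hh := cl_tri P1 P1 (cl_sym' P1 (ccl _ _ hm)) (ccl _ _ hn).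
    change (cl t (c m) (c n)); apply: (cl_mono _ hh).
    have := @e_le R _ _ (leq_addl k k2); lraf.
  have [p hp] := hc c cc.
  exists p.
  - move=> t t0.
    have [N1 hN1] := hp (t / 2) ltac:(lra).
    have [k2 hk2] : exists k2, e k2 < t / 2 by apply: e_small; lraf.
    pose i := maxn N1 k2.
    exists (M (k + i)%N) => n hn.
    have [b Anb hb] := step (k + i)%N (M (k + i)%N) n (leqnn _) hn (c i) (cin i).
    exists b => //.
    have h1 : cl (t / 2) p (c i) := hN1 i (leq_maxl _ _).
    have h2 : cl (t / 2) (c i) b.
      apply: (cl_mono _ hb).
      have := @e_le R _ _ (leq_trans (leq_maxr N1 k2) (leq_addl k i)); lraf.
    exact: cl_tri2 t0 h1 h2.
  - have [N1 hN1] := hp (e k) (e_gt0 k).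
    have h1 : cl (2 * e (k + 0)%N) (c 0) (c N1) := ccl 0%N N1 (leq0n _).
    rewrite addn0 in h1.
    have h2 := cl_sym' (e_gt0 k) (hN1 N1 (leqnn _)).
    have P2 : 0 < 2 * e k :> R by have := @e_gt0 R k; lraf.
    apply: (cl_mono _ (cl_tri P2 (e_gt0 k) h1 h2)); lraf.
have [a0 Aa0] := An0 (M 0%N).
have [p0 Ap0 _] := chain 0%N a0 Aa0.
exists A; split.
- by exists p0.
- move=> p hp t t0.
  have [q Aq hq] := hp (t / 2) ltac:(lra).
  have [N1 hN1] := Aq (t / 2) ltac:(lra).
  exists N1 => n hn; have [a Ana ha] := hN1 n hn; exists a => //.
  exact: cl_tri2 t0 hq ha.
- move=> p q l Ap Aq l01 t t0.
  have [N1 h1] := Ap t t0; have [N2 h2] := Aq t t0.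
  exists (maxn N1 N2) => n hn.
  have [a Ana ha] := h1 n (leq_trans (leq_maxl _ _) hn).
  have [b Anb hb] := h2 n (leq_trans (leq_maxr _ _) hn).
  exists (l *: a + (1 - l) *: b); first exact: Anc n _ _ _ Ana Anb l01.
  exact: cl_conv t0 l01 ha hb.
- move=> t t0.
  have [k hk] : exists k, e k < t / 8 by apply: e_small; lraf.
  have e3 : 0 < 3 * e k :> R by have := @e_gt0 R k; lraf.
  exists (M k) => n hn; apply/HE; split.
  + apply: (Hput t0 (An0 n)) => b Anb.
    have [a Aa ha] := step k n (M k) hn (leqnn _) b Anb.
    have [p Ap hp'] := chain k a Aa.
    by exists p => //; apply: (cl_mono _ (cl_tri (e_gt0 k) e3 ha hp')); lraf.
  + have A0 : A !=set0 by exists p0.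
    apply: (Hput t0 A0) => p Ap.
    have [N1 hN1] := Ap (e k) (e_gt0 k).
    have [a Ana ha] := hN1 (maxn N1 (M k)) (leq_maxl _ _).
    have [b Anb hb] := step k (maxn N1 (M k)) n (leq_maxr _ _) hn a Ana.
    by exists b => //; apply: (cl_mono _ (cl_tri (e_gt0 k) (e_gt0 k) ha hb)); lraf.
Qed.

Lemma tbound (An : nat -> set L) A : (forall n, s_compact nu (An n)) ->
  (forall n, An n !=set0) -> H_cvg nu An A ->
  forall s, 0 < s -> exists n0 (f : 'I_n0 -> L), forall p, A p -> exists k, cl s (f k) p.
Proof.
move=> Anc An0 hcv s s0.
have s2 : 0 < s / 2 by lraf.
have [N hN] := hcv (s / 2) s2.
have /HE [_ h2] := hN N (leqnn N).
pose O (q : L) := [set y | exists2 r, 0 < r & Unbh nu r y `<=` Unbh nu (s / 2) q].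
have Oo q : s_open nu (O q).
  move=> y [r r0 hr]; exists (r / 2); first by lraf.
  move=> z hz; exists (r / 2); first by lraf.
  move=> w hw; apply: hr; exact: cl_tri2 r0 hz hw.
have cov p : An N p -> exists i, O i p.
  by move=> _; exists p, (s / 2).
have [n0 [f hf]] := Anc N L O Oo cov.
exists n0, f => p Ap.
have [a Ana ha] := Hget (An0 N) h2 Ap.
have [k [r r0 hr]] := hf a Ana.
exists k.
have h1 : cl (s / 2) (f k) a := hr a (cl_refl a r0).
apply: (cl_mono _ (cl_tri s2 s2 h1 (cl_sym' s2 ha))); lraf.
Qed.

Lemma compact_of A : s_complete nu -> s_closed nu A ->
  (forall s, 0 < s -> exists n0 (f : 'I_n0 -> L), forall p, A p -> exists k, cl s (f k) p) ->
  s_compact nu A.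
Proof.
move=> hc Acl tb I O Oo cov.
pose fc (S : set L) := exists n (f : 'I_n -> I), forall p, S p -> exists k, O (f k) p.
apply: contrapT => nfc; change (~ fc A) in nfc.
have fc_sub S T : S `<=` T -> fc T -> fc S.
  by move=> ST [n [f hf]]; exists n, f => p /ST /hf.
have fc_union n0 (S : 'I_n0 -> set L) : (forall k, fc (S k)) ->
    fc [set p | exists k, S k p].
  move=> hS.
  have : forall k, exists nf : {n : nat & 'I_n -> I},
      forall p, S k p -> exists j, O (projT2 nf j) p.
    by move=> k; have [n [f hf]] := hS k; exists (existT _ n f).
  case/choice => F hF.
  pose T : finType := {k : 'I_n0 & 'I_(projT1 (F k))}.
  exists #|T|, (fun j : 'I_#|T| => let x := enum_val j in projT2 (F (tag x)) (tagged x)).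
  move=> p [k Skp]; have [j hj] := hF k p Skp.
  exists (enum_rank (Tagged (fun k => 'I_(projT1 (F k))) j)).
  by rewrite /= enum_rankK.
have split S : S `<=` A -> ~ fc S -> forall s, 0 < s ->
    exists c, ~ fc (S `&` Unbh nu s c).
  move=> SA nS s s0; apply: contrapT => hne.
  have hall c : fc (S `&` Unbh nu s c) by apply: contrapT => hh; apply: hne; exists c.
  have [n0 [f hf]] := tb s s0.
  apply: nS; apply: (fc_sub _ _ _ (fc_union n0 (fun k => S `&` Unbh nu s (f k))
     (fun k => hall (f k)))).
  by move=> p Sp; have [k hk] := hf p (SA p Sp); exists k.
have ne S : ~ fc S -> S !=set0.
  move=> nS; apply: contrapT => hh; apply: nS.
  have f0 : 'I_0 -> I by case=> m; rewrite ltn0.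
  by exists 0%N, f0 => p Sp; exfalso; apply: hh; exists p.
have : forall Ss : set L * R, exists c : L,
    (Ss.1 `<=` A /\ ~ fc Ss.1 /\ 0 < Ss.2) -> ~ fc (Ss.1 `&` Unbh nu Ss.2 c).
  case=> S s /=; have [[SA [nS s0]]|hh] := pselect (S `<=` A /\ ~ fc S /\ 0 < s).
    by have [c hc'] := split S SA nS s s0; exists c.
  by exists 0.
case/choice => h hh.
pose Sq := fix Sq (k : nat) : set L :=
  if k is k'.+1 then Sq k' `&` Unbh nu (e k') (h (Sq k', e k')) else A.
have inv k : Sq k `<=` A /\ ~ fc (Sq k).
  elim: k => [|k [SA nS]]; first by split.
  split; first by move=> p [/SA].
  by apply: (hh (Sq k, e k)); split; [|split; [|exact: e_gt0]].
have Sdec i j : (i <= j)%N -> Sq j `<=` Sq i.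
  elim: j => [|j IH]; first by rewrite leqn0 => /eqP ->.
  rewrite leq_eqVlt => /orP[/eqP->//|]; rewrite ltnS => /IH hij p [Sp _].
  exact: hij p Sp.
have : forall k, exists y, Sq k.+1 y by move=> k; exact: ne _ (inv k.+1).2.
case/choice => x hx.
have xin i j : (i <= j)%N -> cl (e i) (h (Sq i, e i)) (x j).
  by move=> ij; have := Sdec i.+1 j.+1 ij (x j) (hx j); case=> _ hu; exact: hu.
have xcl i j : (i <= j)%N -> cl (2 * e i) (x i) (x j).
  move=> ij.
  have := cl_tri (e_gt0 i) (e_gt0 i) (cl_sym' (e_gt0 i) (xin i i (leqnn i))) (xin i j ij).
  by apply: cl_mono; lraf.
have cc : s_cauchy nu x.
  move=> t t0; have [N0 hN0] : exists N0, e N0 < t / 4 by apply: e_small; lraf.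
  exists N0 => m n hm hn.
  have P : 0 < 2 * e N0 :> R by have := @e_gt0 R N0; lraf.
  have hh' := cl_tri P P (cl_sym' P (xcl _ _ hm)) (xcl _ _ hn).
  change (cl t (x m) (x n)); apply: (cl_mono _ hh'); lraf.
have [z hz] := hc x cc.
have Az : A z.
  apply: Acl => t t0; have [N0 hN0] := hz t t0.
  exists (x N0); first exact: (inv N0.+1).1 _ (hx N0).
  exact: hN0 N0 (leqnn _).
have [i0 Oi0] := cov z Az.
have [r r0 hr] := Oo i0 z Oi0.
have r2 : 0 < r / 2 by lraf.
have [N1 hN1] := hz (r / 2) r2.
have [k2 hk2] : exists k2, e k2 < r / 8 by apply: e_small; lraf.
pose k := maxn N1 k2.
apply: (inv k.+1).2; exists 1%N, (fun _ => i0) => y Sy; exists ord0.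
apply: hr.
have h1 : cl (e k) (h (Sq k, e k)) y by case: Sy.
have h2 := xin k k (leqnn k).
have P : 0 < 2 * e k :> R by have := @e_gt0 R k; lraf.
have hxy : cl (2 * e k) (x k) y.
  apply: (cl_mono _ (cl_tri (e_gt0 k) (e_gt0 k) (cl_sym' (e_gt0 k) h2) h1)); lraf.
have hzx : cl (r / 2) z (x k) := hN1 k (leq_maxl _ _).
have := @e_le R _ _ (leq_maxr N1 k2).
move=> hk; apply: (cl_mono _ (cl_tri r2 P hzx hxy)); lraf.
Qed.

Lemma main : [/\ H_closed_in_Pf nu (Pfc nu),
      (s_complete nu -> H_complete nu (Pfc nu)) &
      (s_complete nu -> H_complete nu (Pkc nu))].
Proof.
split; first exact: part1.
- move=> hc An hAn hcau.
  have [A [A0 Acl Acv hcv]] :=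
    limit_exists An hc (fun n => (hAn n).1.1) (fun n => (hAn n).2) hcau.
  by exists A; first split; first split.
- move=> hc An hAn hcau.
  have An0 n : An n !=set0 by case: (hAn n).
  have Anc n : convex (An n) by case: (hAn n).
  have Ank n : s_compact nu (An n) by case: (hAn n).
  have [A [A0 Acl Acv hcv]] := limit_exists An hc An0 Anc hcau.
  exists A => //; split => //.
  exact: compact_of A hc Acl (tbound An A Ank An0 hcv).
Qed.

End Aux.

Theorem theorem4p9 (R : realType) (L : lmodType R) (nu : L -> R -> R)
    (tau : (R -> R) -> (R -> R) -> (R -> R)) :
  serstnev_RNS nu tau ->
  sup_continuous tau ->
  (forall (F G : R -> R) (x : R), Dplus F -> Dplus G -> 0 <= x ->
     sup [set Num.min (F (t * x)) (G ((1 - t) * x)) | t in [set t : R | 0 <= t <= 1]]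
       <= tau F G x) ->
  [/\ H_closed_in_Pf nu (Pfc nu),
      (s_complete nu -> H_complete nu (Pfc nu)) &
      (s_complete nu -> H_complete nu (Pkc nu))].
Proof.
move=> HS _ Htr; exact: (@main R L nu tau HS Htr).
Qed.
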